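(* Let $n\ge1$. If $K$ is an $\mathcal{N}$-set in $\mathbb{R}^n$, then $A=(K-K)\cap\mathbb{Z}^n$ is a finite set of lattice points which generates the additive group $\mathbb{Z}^n$.
   Context: $K-K=\{x-y : x,y\in K\}$. An $\mathcal{N}$-set in $\mathbb{R}^n$ is a compact set $K\subseteq\mathbb{R}^n$ such that for every $x\in\mathbb{R}^n$ there exists $y\in K$ with $x-y\in\mathbb{Z}^n$. *)

(* Defs.v *)
From Stdlib Require Import Reals List ZArith.
From Stdlib Require Fin.
Open Scope R_scope.

Definition Rn (n : nat) : Type := Fin.t n -> R.
Definition Zn (n : nat) : Type := Fin.t n -> Z.

(* Open sets of R^n for the standard (product = Euclidean) topology,
   described with sup-norm balls. *)
Definition open_Rn {n : nat} (U : Rn n -> Prop) : Prop :=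
  forall x, U x -> exists eps, 0 < eps /\
    forall y : Rn n, (forall i, Rabs (y i - x i) < eps) -> U y.

Definition compact_Rn {n : nat} (K : Rn n -> Prop) : Prop :=
  forall (I : Type) (U : I -> Rn n -> Prop),
    (forall j, open_Rn (U j)) ->
    (forall x, K x -> exists j, U j x) ->
    exists l : list I, forall x, K x -> exists j, In j l /\ U j x.

Definition diff_is_lattice {n : nat} (x y : Rn n) (z : Zn n) : Prop :=
  forall i, x i - y i = IZR (z i).

Definition N_set {n : nat} (K : Rn n -> Prop) : Prop :=
  compact_Rn K /\
  forall x : Rn n, exists y, K y /\ exists z : Zn n, diff_is_lattice x y z.

Definition diff_lattice_set {n : nat} (K : Rn n -> Prop) (z : Zn n) : Prop :=
  exists x y, K x /\ K y /\ diff_is_lattice x y z.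

Definition finite_set {T : Type} (A : T -> Prop) : Prop :=
  exists l : list T, forall a, A a <-> In a l.

Inductive gen_subgroup {n : nat} (A : Zn n -> Prop) : Zn n -> Prop :=
| gen_in : forall a, A a -> gen_subgroup A a
| gen_zero : gen_subgroup A (fun _ => 0%Z)
| gen_add : forall a b, gen_subgroup A a -> gen_subgroup A b ->
    gen_subgroup A (fun i => (a i + b i)%Z)
| gen_opp : forall a, gen_subgroup A a -> gen_subgroup A (fun i => (- a i)%Z).

Definition generates_Zn {n : nat} (A : Zn n -> Prop) : Prop :=
  forall z : Zn n, gen_subgroup A z.

(* Main.v *)
Require Import Defs.
From Stdlib Require Import Reals List ZArith Lra Lia.
From Stdlib Require Fin.
From Stdlib Require Import Classical FunctionalExtensionality.
Open Scope R_scope.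

Lemma fin_min (n:nat) (f : Fin.t n -> R) :
  (forall i, 0 < f i) -> exists e, 0 < e /\ forall i, e <= f i.
Proof.
  induction n as [|n IH]; intros H.
  - exists 1. split; [lra|]. intro i. exact (Fin.case0 (fun i => 1 <= f i) i).
  - destruct (IH (fun i => f (Fin.FS i))) as [e [He Hi]].
    + intro i; apply H.
    + exists (Rmin (f Fin.F1) e). split.
      * apply Rmin_glb_lt; auto.
      * intro i. refine (Fin.caseS' i (fun i => _ <= f i) _ _).
        -- apply Rmin_l.
        -- intro p. eapply Rle_trans; [apply Rmin_r| apply (Hi p)].
Qed.

Lemma fin_max (n:nat) (f : Fin.t n -> R) : exists M, forall i, f i <= M.
Proof.
  induction n as [|n IH].
  - exists 0. intro i. exact (Fin.case0 (fun i => f i <= 0) i).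
  - destruct (IH (fun i => f (Fin.FS i))) as [M Hi].
    exists (Rmax (f Fin.F1) M). intro i.
    refine (Fin.caseS' i (fun i => f i <= _) _ _).
    + apply Rmax_l.
    + intro p. eapply Rle_trans; [apply (Hi p)|apply Rmax_r].
Qed.

Lemma ball_open (n:nat) (c : Rn n) (r : R) (Q : Prop) :
  open_Rn (fun y : Rn n => Q /\ forall i, Rabs (y i - c i) < r).
Proof.
  intros y [HQ Hy].
  destruct (fin_min n (fun i => r - Rabs (y i - c i))) as [e [He Hi]].
  { intro i; specialize (Hy i); lra. }
  exists e. split; auto. intros y' Hy'. split; auto. intro i.
  specialize (Hi i); specialize (Hy' i); simpl in Hi.
  pose proof (Rabs_triang (y' i - y i) (y i - c i)).
  replace (y' i - y i + (y i - c i)) with (y' i - c i) in H by ring. lra.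
Qed.

Lemma compact_bounded (n:nat) (K : Rn n -> Prop) :
  compact_Rn K -> exists B, forall y, K y -> forall i, Rabs (y i) < B.
Proof.
  intros Hc.
  destruct (Hc nat (fun m => fun y : Rn n => True /\ forall i, Rabs (y i - (fun _ => 0) i) < INR m))
    as [l Hl].
  - intro m. apply ball_open.
  - intros y _. destruct (fin_max n (fun i => Rabs (y i - 0))) as [M HM].
    destruct (INR_unbounded M) as [m Hm]. exists m. split; auto.
    intro i. specialize (HM i). simpl in *. lra.
  - exists (fold_right (fun m acc => Rmax (INR m) acc) 0 l).
    assert (Hf : forall m, In m l -> INR m <= fold_right (fun m acc => Rmax (INR m) acc) 0 l).
    { clear Hl. induction l as [|h t IH]; simpl; intros m Hm; [contradiction|].
      destruct Hm as [<-|Hm]; [apply Rmax_l|].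
      eapply Rle_trans; [apply IH; auto|apply Rmax_r]. }
    intros y Hy i. destruct (Hl y Hy) as [j [Hj [_ Hu]]].
    specialize (Hu i). specialize (Hf j Hj). simpl in Hu.
    rewrite Rminus_0_r in Hu. lra.
Qed.

Lemma box_list (n:nat) (N:Z) : exists l : list (Zn n),
  forall z : Zn n, (forall i, (-N <= z i <= N)%Z) -> In z l.
Proof.
  induction n as [|n IH].
  - exists ((fun _ => 0%Z) :: nil). intros z _. left.
    extensionality i. exact (Fin.case0 (fun i => 0%Z = z i) i).
  - destruct IH as [l' Hl'].
    set (rng := map (fun k => (Z.of_nat k - N)%Z) (seq 0 (Z.to_nat (2*N+1)))).
    set (cf := fun (a:Z) (z' : Zn n) => (fun i : Fin.t (S n) => Fin.caseS' i (fun _ => Z) a z') : Zn (S n)).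
    exists (flat_map (fun a => map (fun z' => cf a z') l') rng).
    intros z Hz. apply in_flat_map. exists (z Fin.F1). split.
    + unfold rng. apply in_map_iff. exists (Z.to_nat (z Fin.F1 + N)).
      specialize (Hz Fin.F1). split; [lia|]. apply in_seq. lia.
    + apply in_map_iff. exists (fun i => z (Fin.FS i)). split.
      * extensionality i. unfold cf.
        refine (Fin.caseS' i (fun i => _ = z i) _ _); reflexivity.
      * apply Hl'. intro i. apply Hz.
Qed.

Lemma finite_of_sub {T:Type} (A : T -> Prop) (l : list T) :
  (forall a, A a -> In a l) -> finite_set A.
Proof.
  revert A. induction l as [|h t IH]; intros A HA.
  - exists nil. intro a; split; [intro H; apply (HA a H)| intros []].
  - destruct (IH (fun a => A a /\ a <> h)) as [l' Hl'].
    { intros a [Ha Hne]. destruct (HA a Ha); [congruence|auto]. }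
    destruct (classic (A h)) as [Hh|Hh].
    + exists (h :: l'). intro a. split.
      * intro Ha. destruct (classic (a = h)) as [->|Hne]; [left; auto|right; apply Hl'; auto].
      * intros [<-|H]; auto. apply Hl' in H; tauto.
    + exists l'. intro a. split.
      * intro Ha. apply Hl'. split; auto. intros ->; auto.
      * intro H; apply Hl' in H; tauto.
Qed.

Lemma frac_bound (t : R) : t <> IZR (up t - 1) ->
  exists r, 0 < r /\ forall m : Z, 2 * r <= Rabs (t - IZR m).
Proof.
  intros Hne. destruct (archimed t) as [H1 H2].
  rewrite minus_IZR in Hne.
  set (u := IZR (up t)) in *.
  set (f := t - (u - 1)).
  assert (Hf0 : 0 < f) by (unfold f; lra).
  assert (Hf1 : f < 1) by (unfold f; lra).
  exists (Rmin f (1 - f) / 2). split.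
  - assert (0 < Rmin f (1-f)) by (apply Rmin_glb_lt; lra). lra.
  - intro m. replace (2 * (Rmin f (1 - f) / 2)) with (Rmin f (1-f)) by field.
    destruct (Z_le_gt_dec m (up t - 1)) as [Hm|Hm].
    + apply IZR_le in Hm. rewrite minus_IZR in Hm. fold u in Hm.
      eapply Rle_trans; [apply Rmin_l|]. rewrite Rabs_right; unfold f; lra.
    + assert (Hm' : (up t <= m)%Z) by lia. apply IZR_le in Hm'. fold u in Hm'.
      eapply Rle_trans; [apply Rmin_r|]. rewrite Rabs_left1; unfold f; lra.
Qed.

Lemma int_small (m : Z) : Rabs (IZR m) < 1 -> m = 0%Z.
Proof.
  intro H. apply Rabs_def2 in H. destruct H as [H1 H2].
  apply lt_IZR in H1. assert (H3 : IZR (-1) < IZR m) by (replace (IZR (-1)) with (-(1)) by reflexivity; lra).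
  apply lt_IZR in H3. lia.
Qed.

Lemma local_closed (n:nat) (K : Rn n -> Prop) (x : Rn n) : compact_Rn K ->
  exists d, 0 < d /\ forall k y w, K k -> diff_is_lattice x y w ->
    (forall i, Rabs (y i - k i) < d) -> K y.
Proof.
  intros Hc.
  set (good := fun (k : Rn n) (r : R) => 0 < r /\
     ((K k /\ (exists w, diff_is_lattice x k w) /\ r = /2) \/
      (exists i, forall m, 2 * r <= Rabs (k i - x i - IZR m)))).
  destruct (Hc (Rn n * R)%type
    (fun p => fun y : Rn n => good (fst p) (snd p) /\ forall i, Rabs (y i - fst p i) < snd p))
    as [l Hl].
  - intros [k r]. apply ball_open.
  - intros k Hk.
    destruct (classic (forall i, k i - x i = IZR (up (k i - x i) - 1))) as [Hall|Hn].
    + exists (k, /2). simpl. split.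
      * split; [lra|]. left. split; auto. split; auto.
        exists (fun i => (- (up (k i - x i) - 1))%Z). intro i.
        rewrite opp_IZR, <- Hall. ring.
      * intro i. rewrite Rminus_diag, Rabs_R0. lra.
    + apply not_all_ex_not in Hn. destruct Hn as [i Hi].
      destruct (frac_bound _ Hi) as [r [Hr Hm]].
      exists (k, r). simpl. split.
      * split; auto. right. exists i. intro m. specialize (Hm m). 
        replace (k i - x i - IZR m) with (k i - x i - IZR m) by ring. exact Hm.
      * intro j. rewrite Rminus_diag, Rabs_R0. lra.
  - set (dl := fold_right (fun p acc => if Rlt_dec 0 (snd p) then Rmin (snd p) acc else acc) (/2) l).
    assert (Hd : 0 < dl /\ dl <= /2 /\ forall p, In p l -> 0 < snd p -> dl <= snd p).
    { unfold dl. clear Hl. induction l as [|h t IH]; simpl.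
      - split; [lra|]. split; [lra|]. intros p [].
      - destruct IH as [IH1 [IH2 IH3]]. destruct (Rlt_dec 0 (snd h)) as [Hh|Hh].
        + split; [apply Rmin_glb_lt; auto|]. split.
          * eapply Rle_trans; [apply Rmin_r|auto].
          * intros p [<-|Hp] Hp0; [apply Rmin_l|].
            eapply Rle_trans; [apply Rmin_r|auto].
        + split; auto. split; auto. intros p [<-|Hp] Hp0; [contradiction|auto]. }
    destruct Hd as [Hd1 [Hd2 Hd3]].
    exists dl. split; auto. intros k y w Hk Hyw Hyk.
    destruct (Hl k Hk) as [[kj rj] [Hin [[Hr Hg] Hb]]]. simpl in *.
    specialize (Hd3 _ Hin Hr). simpl in Hd3.
    destruct Hg as [[Hkj [[wj Hwj] ->]] | [i Hi]].
    + replace y with kj; auto. extensionality i.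
      assert (Hz : (wj i - w i)%Z = 0%Z).
      { apply int_small. rewrite minus_IZR, <- (Hwj i), <- (Hyw i).
        specialize (Hyk i); specialize (Hb i).
        apply Rabs_def2 in Hyk; apply Rabs_def2 in Hb.
        apply Rabs_def1; lra. }
      specialize (Hwj i); specialize (Hyw i).
      assert (IZR (wj i) = IZR (w i)) by (f_equal; lia). lra.
    + exfalso. specialize (Hi (- w i)%Z). rewrite opp_IZR in Hi.
      specialize (Hyw i). specialize (Hyk i); specialize (Hb i).
      apply Rabs_def2 in Hyk; apply Rabs_def2 in Hb.
      assert (Rabs (kj i - x i - - IZR (w i)) < 2 * rj) by (apply Rabs_def1; lra).
      lra.
Qed.

Lemma line_conn (n:nat) (P : Rn n -> Prop)
  (loc : forall x, exists d, 0 < d /\ forall x', (forall i, Rabs (x' i - x i) < d) -> (P x' <-> P x))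
  (a b : Rn n) : P a -> P b.
Proof.
  intros Pa.
  set (phi := fun t : R => (fun i => a i + t * (b i - a i)) : Rn n).
  set (E := fun t => 0 <= t <= 1 /\ forall s, 0 <= s <= t -> P (phi s)).
  assert (Hphi0 : phi 0 = a) by (extensionality i; unfold phi; ring).
  assert (Hphi1 : phi 1 = b) by (extensionality i; unfold phi; ring).
  destruct (completeness E) as [m [Hub Hlub]].
  - exists 1. intros t [Ht _]; lra.
  - exists 0. split; [lra|]. intros s Hs. replace s with 0 by lra. rewrite Hphi0; auto.
  - assert (HE0 : E 0).
    { split; [lra|]. intros s Hs. replace s with 0 by lra. rewrite Hphi0; auto. }
    assert (Hm0 : 0 <= m) by (apply Hub; auto).
    assert (Hm1 : m <= 1) by (apply Hlub; intros t [Ht _]; lra).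
    destruct (loc (phi m)) as [d [Hd Hloc]].
    destruct (fin_min n (fun i => d / (Rabs (b i - a i) + 1))) as [eta [Heta Hei]].
    { intro i. pose proof (Rabs_pos (b i - a i)). apply Rdiv_lt_0_compat; lra. }
    assert (Hnear : forall t, Rabs (t - m) < eta -> P (phi t) <-> P (phi m)).
    { intros t Ht. apply Hloc. intro i. unfold phi.
      replace (a i + t * (b i - a i) - (a i + m * (b i - a i))) with ((t - m) * (b i - a i)) by ring.
      rewrite Rabs_mult. specialize (Hei i).
      pose proof (Rabs_pos (b i - a i)). pose proof (Rabs_pos (t - m)).
      assert (eta * (Rabs (b i - a i) + 1) <= d).
      { apply (Rmult_le_compat_r (Rabs (b i - a i) + 1)) in Hei; [|lra].
        field_simplify in Hei; lra. }
      nra. }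
    assert (Ht0 : exists t0, E t0 /\ m - eta < t0).
    { apply NNPP. intro Hno.
      assert (m <= m - eta); [|lra].
      apply Hlub. intros t Et. apply Rnot_lt_le. intro Hlt. apply Hno. exists t; auto. }
    destruct Ht0 as [t0 [[Ht0a Ht0b] Ht0c]].
    assert (Ht0m : t0 <= m) by (apply Hub; split; auto).
    assert (Pm : P (phi m)).
    { apply (Hnear t0). apply Rabs_def1; lra. apply Ht0b; lra. }
    set (t1 := Rmin 1 (m + eta / 2)).
    assert (Et1 : E t1).
    { split.
      - split; [unfold t1; apply Rmin_glb; lra| apply Rmin_l].
      - intros s Hs. destruct (Rle_dec s t0) as [Hs0|Hs0].
        + apply Ht0b; lra.
        + apply Hnear; auto. assert (s <= m + eta/2) by (pose proof (Rmin_r 1 (m + eta/2)); fold t1 in H; lra).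
          apply Rabs_def1; lra. }
    assert (t1 <= m) by (apply Hub; auto).
    assert (Ht1 : t1 = 1).
    { unfold t1 in *. unfold Rmin in *. destruct (Rle_dec 1 (m + eta/2)); lra. }
    rewrite <- Hphi1. destruct Et1 as [_ Hs]. apply Hs. lra.
Qed.

Theorem mainTheorem8 (n : nat) (hn : (1 <= n)%nat) (K : Rn n -> Prop)
  (hK : N_set K) :
  finite_set (diff_lattice_set K) /\ generates_Zn (diff_lattice_set K).
Proof.
  destruct hK as [Hc Hcov]. split.
  - destruct (compact_bounded n K Hc) as [B HB].
    set (N := up (2 * B)).
    destruct (box_list n N) as [l Hl].
    apply (finite_of_sub _ l). intros z [x [y [Hx [Hy Hz]]]]. apply Hl. intro i.
    specialize (Hz i). pose proof (HB x Hx i) as H1. pose proof (HB y Hy i) as H2.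
    destruct (archimed (2 * B)) as [A1 _]. fold N in A1.
    apply Rabs_def2 in H1; apply Rabs_def2 in H2.
    assert (IZR (z i) < IZR N) by lra.
    assert (IZR (- N) < IZR (z i)) by (rewrite opp_IZR; lra).
    apply lt_IZR in H; apply lt_IZR in H0. lia.
  - set (A := diff_lattice_set K). set (G := gen_subgroup A).
    set (P := fun x : Rn n => exists y z, K y /\ diff_is_lattice x y z /\ G z).
    set (Q := fun x : Rn n => exists y z, K y /\ diff_is_lattice x y z /\ ~ G z).
    assert (PQ : forall x, P x \/ Q x).
    { intro x. destruct (Hcov x) as [y [Hy [z Hz]]].
      destruct (classic (G z)); [left|right]; exists y, z; auto. }
    assert (nPQ : forall x, P x -> Q x -> False).
    { intros x [y1 [z1 [Hy1 [H1 G1]]]] [y2 [z2 [Hy2 [H2 G2]]]]. apply G2.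
      assert (Gd : G (fun i => (z1 i - z2 i)%Z)).
      { apply gen_in. exists y2, y1. split; auto. split; auto. intro i.
        rewrite minus_IZR, <- H1, <- H2. ring. }
      pose proof (gen_add A _ _ G1 (gen_opp A _ Gd)) as Hs.
      replace z2 with (fun i => (z1 i + - (z1 i - z2 i))%Z); [exact Hs|].
      apply functional_extensionality; intro i; lia. }
    assert (loc : forall x, exists d, 0 < d /\ forall x', (forall i, Rabs (x' i - x i) < d) -> (P x' <-> P x)).
    { intro x. change (Rn n) in x. destruct (local_closed n K x Hc) as [d [Hd Hl]].
      exists d. split; auto. intros x' Hx'.
      assert (tr : forall (R0 : Zn n -> Prop), (exists y z, K y /\ diff_is_lattice x' y z /\ R0 z) ->
                                (exists y z, K y /\ diff_is_lattice x y z /\ R0 z)).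
      { intros R0 [y' [z [Hy' [Hd' Hr]]]].
        exists (fun i => x i - IZR (z i)), z. split; [|split; auto].
        - apply (Hl y' _ z Hy').
          + intro i. ring.
          + intro i. specialize (Hd' i). specialize (Hx' i).
            replace (x i - IZR (z i) - y' i) with (x i - x' i) by lra.
            rewrite Rabs_minus_sym. auto.
        - intro i; ring. }
      split.
      - intro HP. exact (tr (fun z => G z) HP).
      - intro HP. destruct (PQ x') as [|HQ]; auto. exfalso. apply (nPQ x); auto.
        exact (tr (fun z => ~ G z) HQ). }
    destruct (Hcov (fun _ => 0)) as [y0 [Hy0 _]].
    assert (P0 : P y0).
    { exists y0, (fun _ => 0%Z). split; auto. split; [intro i; simpl; ring|]. apply gen_zero. }
    intro z.
    destruct (line_conn n P loc y0 (fun i => y0 i + IZR (z i)) P0) as [y [w [Hy [Hw Gw]]]].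
    assert (Gd : G (fun i => (z i - w i)%Z)).
    { apply gen_in. exists y, y0. split; auto. split; auto. intro i.
      specialize (Hw i). simpl in Hw. rewrite minus_IZR. lra. }
    pose proof (gen_add A _ _ Gd Gw) as Hs.
    replace z with (fun i => (z i - w i + w i)%Z); [exact Hs|].
    apply functional_extensionality; intro i; lia.
Qed.
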